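(* Let $G$ be a finite group and $p$ a prime with $\gcd(p-1,|G|)=1$. Suppose $|G'|=p^2$ and $|G'\cap Z(G)|=p$. Then: (a) $\Pr(G)=\frac{2p^2-1}{p^4}$ if $C_G(G')$ is abelian, and $\Pr(G)=\frac{1}{p^4}\left(\frac{p-1}{p^{2s-1}}+p^2+p-1\right)$ otherwise; (b) $|G/Z(G)|=p^3$ if $C_G(G')$ is abelian, and $|G/Z(G)|\in\{p^{2s+2},p^{2s+3}\}$ otherwise; where, when $C_G(G')$ is non-abelian, $s$ is the positive integer with $p^{2s}=|C_G(G'):Z(C_G(G'))|$. Moreover, writing $N=G'\cap Z(G)$ and $\bar G = G/N$, $\hat G = G/Z(G)$, we have $|\bar G : Z(\bar G)| = |\hat G : Z(\hat G)| = p^2$.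
   Context: $G$ is a finite group, $G'$ its commutator subgroup, $Z(G)$ its center, $C_G(G')$ the centralizer of $G'$ in $G$. The commutativity degree is $\Pr(G)=\frac{|\{(x,y)\in G\times G : xy=yx\}|}{|G|^2}$. *)

(* Defs.v *)
From mathcomp Require Import all_boot all_order all_algebra all_fingroup all_solvable.
Set Implicit Arguments. Unset Strict Implicit. Unset Printing Implicit Defensive.
Import GRing.Theory Num.Theory.

Definition comm_pairs (gT : finGroupType) (G : {set gT}) : {set gT * gT} :=
  [set xy in setX G G | (xy.1 * xy.2 == xy.2 * xy.1)%g].

Definition comm_degree (gT : finGroupType) (G : {set gT}) : rat :=
  (#|comm_pairs G|%:R / (#|G| ^ 2)%:R)%R.

(* Main.v *)
Require Import Defs.
From mathcomp Require Import all_boot all_order all_algebra all_fingroup all_solvable.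
From mathcomp Require Import ring.
Import GRing.Theory Num.Theory.
Set Implicit Arguments. Unset Strict Implicit. Unset Printing Implicit Defensive.
Open Scope group_scope.
Lemma comm_morph (gT : finGroupType) (K A : {group gT}) x :
  {in K, forall k, [~ k, x] \in A} -> K \subset 'C(A) ->
  {f : {morphism K >-> gT} | {in K, forall k, f k = [~ k, x]}}.
Proof.
move=> KA cKA.
have fM : {in K &, {morph (fun k => [~ k, x]) : a b / a * b}}.
  move=> a b Ka Kb /=; rewrite commMgJ; congr (_ * _).
  by rewrite /conjg -(centP (subsetP cKA b Kb)) ?KA // mulKg.
by exists (Morphism fM).
Qed.

Lemma ker_comm (gT : finGroupType) (K : {group gT}) x (f : {morphism K >-> gT}) :
  {in K, forall k, f k = [~ k, x]} -> 'ker f = 'C_K[x].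
Proof.
move=> fE; apply/setP=> k; apply/idP/idP => [kk|].
  have Kk := dom_ker kk; rewrite inE Kk; move/(kerP _ Kk): kk.
  by rewrite fE // => /eqP/commgP/cent1P.
rewrite inE => /andP[Kk /cent1P cx]; apply/(kerP _ Kk); rewrite fE //; exact/eqP/commgP.
Qed.

Lemma card_comm (gT : finGroupType) (K : {group gT}) x (f : {morphism K >-> gT}) :
  {in K, forall k, f k = [~ k, x]} -> #|f @* K| = #|K : 'C_K[x]|.
Proof. by move=> fE; rewrite card_morphim setIid (ker_comm fE). Qed.

Lemma prime_sub_eq (gT : finGroupType) (P B : {group gT}) g :
  prime #|P| -> B \subset P -> g \in B -> g != 1 -> B :=: P.
Proof.
move=> prP sBP Bg ng; apply/eqP; rewrite eqEsubset sBP /=.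
apply/negPn/negP => nPB; have := prime_TIg prP nPB => /setP/(_ g).
by rewrite inE Bg (subsetP sBP) // inE (negbTE ng).
Qed.

Lemma sq_index (gT : finGroupType) (q : nat) : prime q -> forall K : {group gT},
  #|K^`(1)| %| q -> K^`(1) \subset 'Z(K) -> exists s, #|K : 'Z(K)| = (q ^ (2 * s))%N.
Proof.
move=> pr_q K; move: {2}_.+1 (ltnSn #|K|) => n.
elim: n K => // n IH K ltKn dK' sK'Z.
have [abK|nabK] := boolP (abelian K).
  by exists 0; rewrite muln0 expn0 (center_idP abK) indexgg.
have cK' : #|K^`(1)| = q.
  case/primeP: pr_q => _ /(_ _ dK') /orP[]/eqP // /eqP.
  rewrite -trivg_card1 => /eqP/derG1P abK; by rewrite abK in nabK.
have prK' : prime #|K^`(1)| by rewrite cK'.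
have [x Kx nx] : exists2 x, x \in K & ~~ (K \subset 'C[x]).
  case/subsetPn: nabK => x Kx ncx; exists x => //; by rewrite sub_cent1.
case/subsetPn: nx => y Ky nyx.
have cKK' : K \subset 'C(K^`(1)) by rewrite centsC (subset_trans sK'Z) ?subsetIr.
have memK' : forall a b, a \in K -> b \in K -> [~ a, b] \in K^`(1).
  by move=> a b Ka Kb; rewrite derg1 mem_commg.
have [fa faE] := comm_morph (fun k Kk => memK' k x Kk Kx) cKK'.
have nyx1 : [~ y, x] != 1 by apply: contra nyx => /commgP/cent1P.
have sfaK : fa @* K \subset K^`(1).
  by apply/subsetP => _ /morphimP[k _ Kk ->]; rewrite faE // memK'.
have efa : fa @* K :=: K^`(1).
  by apply: (prime_sub_eq prK' sfaK (g := [~ y, x])) => //; rewrite -faE ?mem_morphim.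
have iK1 : #|K : 'C_K[x]| = q by rewrite -(card_comm faE) efa cK'.
set K1 := 'C_K[x]%G.
have sK1K : K1 \subset K by apply: subsetIl.
have Kx1 : x \in K1 by rewrite inE Kx cent1id.
have [fb fbE] := comm_morph (K := K1) (fun k Kk => memK' k y (subsetP sK1K k Kk) Ky)
   (subset_trans sK1K cKK').
have nxy1 : [~ x, y] != 1 by rewrite -invgR eq_invg1.
have sfbK : fb @* K1 \subset K^`(1).
  by apply/subsetP => _ /morphimP[k _ Kk ->]; rewrite fbE // memK' // (subsetP sK1K).
have efb : fb @* K1 :=: K^`(1).
  by apply: (prime_sub_eq prK' sfbK (g := [~ x, y])) => //; rewrite -fbE ?mem_morphim.
have iH : #|K1 : 'C_K1[y]| = q by rewrite -(card_comm fbE) efb cK'.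
set H := 'C_K1[y]%G.
have sHK1 : H \subset K1 by apply: subsetIl.
have sHK : H \subset K := subset_trans sHK1 sK1K.
have iKH : #|K : H| = (q * q)%N by rewrite -(Lagrange_index sK1K sHK1) iK1 iH.
have sZH : 'Z(K) \subset H.
  apply/subsetP => z /setIP[Kz cKz].
  have zx : z \in 'C[x] by apply/cent1P; apply: (centP cKz).
  have zy : z \in 'C[y] by apply/cent1P; apply: (centP cKz).
  by rewrite !in_setI Kz zx zy.
have eZ : 'Z(H) = 'Z(K).
  apply/eqP; rewrite eqEsubset; apply/andP; split; last first.
    by rewrite subsetI sZH /= (subset_trans (subsetIr _ _)) // centS.
  apply/subsetP => z /setIP[Hz cHz].
  have Kz := subsetP sHK z Hz.
  have zx : commute z x.
    by have := subsetP sHK1 z Hz; rewrite inE => /andP[_ /cent1P].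
  have zy : commute z y by move: Hz; rewrite inE => /andP[_ /cent1P].
  rewrite inE Kz; apply/centP => c Kc.
  have : fa c \in <[fa y]>.
    have -> : <[fa y]> :=: K^`(1).
      by apply: (prime_sub_eq prK' _ (g := fa y)); rewrite ?cycle_id ?faE // cycle_subG memK'.
    by rewrite faE ?memK'.
  case/cycleP => i ei.
  set c1 := c * (y ^+ i)^-1.
  have Kc1 : c1 \in K by rewrite groupM ?groupV ?groupX.
  have K1c1 : c1 \in K1.
    suff : c1 \in 'ker fa by rewrite (ker_comm faE).
    apply/kerP => //.
    by rewrite morphM ?groupV ?groupX // morphV ?groupX // morphX // ei mulgV.
  have : fb c1 \in <[fb x]>.
    have -> : <[fb x]> :=: K^`(1).
      by apply: (prime_sub_eq prK' _ (g := fb x)); rewrite ?cycle_id ?fbE // cycle_subG memK'.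
    by rewrite fbE ?memK'.
  case/cycleP => j ej.
  set c2 := c1 * (x ^+ j)^-1.
  have Hc2 : c2 \in H.
    suff : c2 \in 'ker fb by rewrite (ker_comm fbE).
    apply/kerP; first by rewrite groupM ?groupV ?groupX.
    by rewrite morphM ?groupV ?groupX // morphV ?groupX // morphX // ej mulgV.
  have -> : c = c2 * x ^+ j * y ^+ i by rewrite /c2 /c1 !mulgKV.
  apply: commuteM; first apply: commuteM.
  - exact: (centP cHz).
  - exact: commuteX.
  exact: commuteX.
have ltHn : #|H| < n.
  apply: (@leq_trans #|K|); last by rewrite -ltnS.
  apply: proper_card; rewrite properE sHK /=.
  apply/negP => /subsetP/(_ y Ky) Hy.
  by have := subsetP sHK1 y Hy; rewrite in_setI (negbTE nyx) andbF.
have dH' : #|H^`(1)| %| q.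
  exact: dvdn_trans (cardSg (dergS 1 sHK)) dK'.
have sH'Z : H^`(1) \subset 'Z(H).
  by rewrite eZ; apply: subset_trans (dergS 1 sHK) sK'Z.
have [s es] := IH H ltHn dH' sH'Z.
exists s.+1; rewrite -(Lagrange_index sHK sZH) iKH.
move: es; rewrite eZ => ->.
by rewrite mulnS expnD -mulnn.
Qed.

Lemma card_cent_sum (gT : finGroupType) (B : {set gT}) x :
  #|B :&: 'C[x]| = \sum_(y in B) (if y \in 'C[x] then 1 else 0)%N.
Proof. by rewrite -sum1_card -big_mkcondr; apply: eq_bigl => y; rewrite inE. Qed.

Lemma sum_swap (gT : finGroupType) (A B : {set gT}) :
  (\sum_(x in A) #|B :&: 'C[x]| = \sum_(y in B) #|A :&: 'C[y]|)%N.
Proof.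
under eq_bigr do rewrite card_cent_sum.
rewrite exchange_big /=; apply: eq_bigr => y _.
by rewrite card_cent_sum; apply: eq_bigr => x _; rewrite cent1C.
Qed.

Lemma card_comm_pairs (gT : finGroupType) (G : {set gT}) :
  #|comm_pairs G| = (\sum_(x in G) #|G :&: 'C[x]|)%N.
Proof.
under eq_bigr do rewrite card_cent_sum -big_mkcondr.
rewrite pair_big_dep /= -sum1_card; apply: eq_bigl => [[x y]] /=.
rewrite inE in_setX /=; case: (x \in G) => //=; case: (y \in G) => //=.
by apply/eqP/cent1P => e; apply/esym.
Qed.

Section Main.
Variables (gT : finGroupType) (G : {group gT}) (p : nat).
Hypotheses (pr_p : prime p) (cop : coprime (p - 1) #|G|)
  (cD : #|G^`(1)| = (p ^ 2)%N) (cN : #|G^`(1) :&: 'Z(G)| = p).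

Let D := (G^`(1))%G.
Let Z := ('Z(G))%G.
Let N := (G^`(1) :&: 'Z(G))%G.

Lemma sDG : D \subset G. Proof. exact: der_sub. Qed.
Lemma nDG : G \subset 'N(D). Proof. exact: normal_norm (der_normal 1 G). Qed.
Lemma sNZ : N \subset Z. Proof. exact: subsetIr. Qed.
Lemma sND : N \subset D. Proof. exact: subsetIl. Qed.
Lemma sNG : N \subset G. Proof. exact: subset_trans sND sDG. Qed.
Lemma nNG : G \subset 'N(N).
Proof. by rewrite normsI ?nDG ?normal_norm ?center_normal. Qed.
Lemma abD : abelian D. Proof. exact: card_p2group_abelian pr_p cD. Qed.
Lemma p_gt1 : (1 < p)%N. Proof. exact: prime_gt1. Qed.

Lemma cardDN : #|D : N| = p.
Proof.
have := Lagrange sND; rewrite cD cN => e.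
by apply/eqP; rewrite -(eqn_pmul2l (prime_gt0 pr_p)) e.
Qed.

Lemma commDG : [~: D, G] \subset N.
Proof.
have nND : D \subset 'N(N) := subset_trans sDG nNG.
rewrite -quotient_cents2 ?nNG //.
have cH : #|D / N| = p by rewrite card_quotient // cardDN.
have cycH : cyclic (D / N) by apply: prime_cyclic; rewrite cH.
have nHQ : G / N \subset 'N(D / N) by apply: quotient_norms; exact: nDG.
set f := conj_aut (D / N).
have e1 : #|f @* (G / N)| = #|G / N : 'C(D / N)|.
  by rewrite card_morphim ker_conj_aut (setIidPr nHQ) -indexgI.
have d1 : #|f @* (G / N)| %| (p - 1).
  rewrite subn1 -(totient_prime pr_p) -cH -card_Aut_cyclic //.
  exact: cardSg (Aut_conj_aut _ _).
have d2 : #|f @* (G / N)| %| #|G|.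
  exact: dvdn_trans (dvdn_morphim _ _) (dvdn_quotient _ _).
have : #|f @* (G / N)| == 1%N.
  by rewrite -dvdn1 -(eqnP cop) dvdn_gcd d1 d2.
by rewrite e1 indexg_eq1 centsC.
Qed.

Let C := ('C_G(G^`(1)))%G.

Lemma sCG : C \subset G. Proof. exact: subsetIl. Qed.
Lemma cCD : C \subset 'C(D). Proof. exact: subsetIr. Qed.
Lemma sDC : D \subset C. Proof. rewrite subsetI sDG; exact: abD. Qed.
Lemma nCG : G \subset 'N(C).
Proof. by rewrite normsI ?normG ?norms_cent ?nDG. Qed.
Lemma cGZ : G \subset 'C(Z). Proof. by rewrite centsC subsetIr. Qed.
Lemma cGN : G \subset 'C(N). Proof. exact: subset_trans cGZ (centS sNZ). Qed.

Lemma commDG_mem h g : h \in D -> g \in G -> [~ h, g] \in N.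
Proof. by move=> Dh Gg; apply: (subsetP commDG); apply: mem_commg. Qed.
Lemma commGD_mem g h : h \in D -> g \in G -> [~ g, h] \in N.
Proof. by move=> Dh Gg; rewrite -invgR groupV commDG_mem. Qed.
Lemma commGG_mem g h : g \in G -> h \in G -> [~ g, h] \in D.
Proof. by move=> Gg Gh; rewrite /D /= derg1 mem_commg. Qed.

Lemma NltD : ~~ (D \subset N).
Proof.
apply/negP => sDN; have := subset_leq_card sDN; rewrite cD cN.
rewrite leqNgt -{1}(expn1 p) ltn_exp2l ?p_gt1 //.
Qed.

Lemma exists_h0 : exists2 h, h \in D & h \notin N.
Proof. by case/subsetPn: NltD => h Dh Nh; exists h. Qed.

Lemma DN_between (B : {group gT}) : N \subset B -> B \subset D -> ~~ (B \subset N) -> B = D.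
Proof.
move=> sNB sBD nBN; apply: val_inj; apply/eqP; rewrite /= eqEcard sBD /= cD.
have := cardSg sBD; rewrite cD; case/(dvdn_pfactor _ _ pr_p) => k.
move=> le2 eB; rewrite eB leq_exp2l ?p_gt1 //.
case: k le2 eB => [|[|k]] // _ eB.
  by have := cardSg sNB; rewrite cN eB expn0 dvdn1 => /eqP p1; have := p_gt1; rewrite p1.
have e : (N : {set gT}) = B by apply/eqP; rewrite eqEcard sNB /= eB cN expn1.
by case/negP: nBN; rewrite -e.
Qed.

Lemma L_cent y (H : {group gT}) : y \in G -> H \subset Z ->
  {in G, forall g, [~ g, y] \in H} -> y \in C.
Proof.
move=> Gy sHZ Hy.
have cGH : G \subset 'C(H) := subset_trans cGZ (centS sHZ).
have [f fE] := comm_morph Hy cGH.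
have sfH : f @* G \subset H.
  by apply/subsetP => _ /morphimP[g _ Gg ->]; rewrite fE // Hy.
have : D \subset 'ker f.
  rewrite ker_trivg_morphim sDG /= /D /= morphim_der //.
  have /derG1P-> : abelian (f @* G).
    exact: abelianS (subset_trans sfH sHZ) (center_abelian G).
  exact: subxx.
rewrite (ker_comm fE) => sDc.
rewrite inE Gy /= -sub_cent1; exact: subset_trans sDc (subsetIr _ _).
Qed.

Lemma coset_comm g y : g \in G -> y \in G ->
  (coset N g \in 'C[coset N y]) = ([~ g, y] \in N).
Proof.
move=> Gg Gy; have nNg := subsetP nNG g Gg; have nNy := subsetP nNG y Gy.
rewrite (sameP cent1P commgP) -morphR //.
apply/eqP/idP => [e|Ng]; last exact: coset_id.
apply: coset_idr => //; exact: groupR.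
Qed.

Lemma memK y g : y \in G ->
  (g \in G :&: coset N @*^-1 'C[coset N y]) = (g \in G) && ([~ g, y] \in N).
Proof.
move=> Gy; rewrite in_setI; case Gg: (g \in G) => //=.
rewrite -coset_comm //; apply/morphpreP/idP => [[]//|->]; split=> //.
exact: subsetP nNG g Gg.
Qed.

Lemma indexGC : #|G : C| = p.
Proof.
have [h0 Dh0 Nh0] := exists_h0.
have Gh0 := subsetP sDG h0 Dh0.
have Hy : {in G, forall g, [~ g, h0] \in N} by move=> g Gg; apply: commGD_mem.
have [f fE] := comm_morph Hy cGN.
have sfN : f @* G \subset N.
  by apply/subsetP => _ /morphimP[g _ Gg ->]; rewrite fE // Hy.
have e1 := card_comm fE.
have eC : 'C_G[h0] = C.
  apply/eqP; rewrite eqEsubset; apply/andP; split; last first.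
    apply/subsetP => x /setIP[Gx cDx]; rewrite inE Gx; apply/cent1P.
    by apply: (centP cDx).
  set M := (<[h0]> <*> N)%G.
  have eM : M = D.
    apply: DN_between; first exact: joing_subr.
      by rewrite join_subG cycle_subG Dh0 sND.
    apply/negP => sMN; case/negP: Nh0; apply: (subsetP sMN).
    exact: (subsetP (joing_subl _ _)) _ (cycle_id h0).
  rewrite subsetI subIset ?subxx //=.
  rewrite -[G^`(1)]/(gval D) -eM /= centY cent_cycle subsetI subsetIr /=.
  by rewrite subIset // cGN.
have dv : #|f @* G| %| p by rewrite -cN; apply: cardSg.
move: dv; rewrite e1 -eC; case/primeP: pr_p => _ H /H /orP[]/eqP // /eqP.
rewrite indexg_eq1 => sGC.
case/negP: Nh0; rewrite inE Dh0 /= inE Gh0 /= -sub_cent1.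
by apply: subset_trans sGC (subsetIr _ _).
Qed.

Lemma maxC (K : {group gT}) : C \subset K -> K \subset G -> ~~ (K \subset C) -> G \subset K.
Proof.
move=> sCK sKG nKC; have := Lagrange_index sKG sCK; rewrite indexGC.
have : #|K : C| %| p by rewrite -indexGC -(Lagrange_index sKG sCK) dvdn_mull.
rewrite -indexg_eq1 in nKC; case/(prime_nt_dvdP pr_p nKC) => ->.
by rewrite -{2}(mul1n p) => /eqP; rewrite eqn_pmul2r ?prime_gt0 // indexg_eq1.
Qed.

Lemma exists_t : exists2 t, t \in G & t \notin C.
Proof.
apply/exists_inP; rewrite -negb_forall_in; apply/negP => /forall_inP sGC.
have : #|G : C| == 1%N by rewrite indexg_eq1; apply/subsetP.
by rewrite indexGC => /eqP p1; have := p_gt1; rewrite p1.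
Qed.

Lemma cCD_comm x z : x \in C -> z \in D -> commute x z.
Proof. by move=> Cx Dz; apply: (centP (subsetP cCD x Cx)). Qed.

Lemma comm_centr a b z1 z2 : a \in C -> b \in C -> z1 \in D -> z2 \in D ->
  [~ a * z1, b * z2] = [~ a, b].
Proof.
move=> Ca Cb Dz1 Dz2.
have Gab : [~ a, b] \in D by apply: commGG_mem; apply: (subsetP sCG).
have Cbz : b * z2 \in C by rewrite groupM // (subsetP sDC).
rewrite commMgJ commgMJ.
have -> : [~ a, z2] = 1 by apply/eqP/commgP; apply: cCD_comm.
have -> : [~ z1, b * z2] = 1.
  by apply/eqP/commgP; apply: commute_sym; apply: cCD_comm.
have cz : forall z, z \in D -> [~ a, b] ^ z = [~ a, b].
  move=> z Dz; apply/conjg_fixP/commgP.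
  by apply: (centsP abD); rewrite ?Gab.
by rewrite mul1g mulg1 !cz.
Qed.

Lemma CN : C^`(1) \subset N.
Proof.
have [t Gt Ct] := exists_t.
have sC'D : C^`(1) \subset D by apply: dergS; exact: sCG.
rewrite subsetI sC'D /= subsetI (subset_trans sC'D sDG) /= centsC.
set K := ('C_G(C^`(1)))%G.
have sCK : C \subset K.
  rewrite subsetI sCG /= centsC; apply: subset_trans sC'D _.
  by rewrite centsC cCD.
have tK : t \in K.
  rewrite inE Gt /= derg1 /commutator cent_gen.
  apply/centP => _ /imset2P[a b Ca Cb ->].
  apply: commute_sym; apply/commgP/conjg_fixP.
  have Ga := subsetP sCG a Ca; have Gb := subsetP sCG b Cb.
  by rewrite conjRg !conjg_mulR comm_centr // commGG_mem.
have nKC : ~~ (K \subset C) by apply/subsetPn; exists t.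
exact: subset_trans (maxC sCK (subsetIl _ _) nKC) (subsetIr _ _).
Qed.

Lemma imX y (f : {morphism C >-> gT}) : y \in G -> y \notin C ->
  {in C, forall c, f c = [~ c, y]} -> f @* C = D.
Proof.
move=> Gy nCy fE.
have sfD : f @* C \subset D.
  apply/subsetP => _ /morphimP[c _ Cc ->]; rewrite fE //.
  by apply: commGG_mem => //; apply: (subsetP sCG).
have sNf : N \subset f @* C.
  have : ~~ (D \subset 'C[y]) by rewrite sub_cent1; apply: contra nCy => cy; rewrite inE Gy.
  case/subsetPn => h Dh nhy.
  have Nhy : [~ h, y] \in N by apply: commDG_mem.
  have fhy : [~ h, y] \in f @* C by rewrite -fE ?mem_morphim // (subsetP sDC).
  apply/negPn/negP => nNf.
  have := prime_TIg (G := N) (H := (f @* C)%G); rewrite cN => /(_ pr_p nNf) /setP/(_ [~ h, y]).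
  rewrite inE Nhy fhy inE => /eqP/commgP/cent1P; by rewrite (negbTE nhy).
have nfN : ~~ (f @* C \subset N).
apply/negP => sfN.
set K := (G :&: coset N @*^-1 'C[coset N y])%G.
have sGK : G \subset K.
  apply: maxC.
  - apply/subsetP => c Cc; rewrite memK // (subsetP sCG) //=.
    by rewrite -fE // (subsetP sfN) // mem_morphim.
  - exact: subsetIl.
  - by apply/subsetPn; exists y => //; rewrite memK // Gy commgg group1.
case/negP: nCy; apply: (L_cent (H := N)) => //; first exact: sNZ.
by move=> g Gg; have := subsetP sGK g Gg; rewrite memK // => /andP[].
by have := DN_between (B := (f @* C)%G) sNf sfD nfN => /(congr1 val).
Qed.

Lemma cardGC : #|G| = (p * #|C|)%N.
Proof. by rewrite -(Lagrange sCG) indexGC mulnC. Qed.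

Lemma idxCCy y : y \in G -> y \notin C -> #|C : 'C_C[y]| = (p ^ 2)%N.
Proof.
move=> Gy nCy.
have Hy : {in C, forall c, [~ c, y] \in D}.
  by move=> c Cc; apply: commGG_mem => //; apply: (subsetP sCG).
have [f fE] := comm_morph Hy cCD.
by rewrite -(card_comm fE) (imX Gy nCy fE) cD.
Qed.

Lemma cardCCy y : y \in G -> y \notin C -> (#|'C_C[y]| * p ^ 2)%N = #|C|.
Proof. by move=> Gy nCy; rewrite -(idxCCy Gy nCy) Lagrange ?subcent1_sub. Qed.

Lemma cardCGy y : y \in G -> y \notin C -> #|'C_G[y]| = (p * #|'C_C[y]|)%N.
Proof.
move=> Gy nCy.
set K := (C <*> 'C_G[y])%G.
have sKG : K \subset G by rewrite join_subG sCG subcent1_sub.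
have nKC : ~~ (K \subset C).
  apply/subsetPn; exists y => //.
  by rewrite (subsetP (joing_subr _ _)) // inE Gy cent1id.
have sGK := maxC (joing_subl _ _) sKG nKC.
have eK : C <*> 'C_G[y] = C * 'C_G[y].
  by apply: norm_joinEr; exact: subset_trans (subsetIl _ _) nCG.
have := mul_cardG C 'C_G[y]; rewrite -eK.
have -> : #|C <*> 'C_G[y]| = #|G|.
  by apply/eqP; rewrite eqn_leq subset_leq_card //= subset_leq_card.
rewrite setIA (setIidPl sCG) cardGC (mulnC p) -mulnA => /eqP.
by rewrite eqn_pmul2l ?cardG_gt0 // => /eqP.
Qed.

Lemma cosetH_comm (H : {group gT}) g y : G \subset 'N(H) -> g \in G -> y \in G ->
  (coset H g \in 'C[coset H y]) = ([~ g, y] \in H).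
Proof.
move=> nHG Gg Gy; have nHg := subsetP nHG g Gg; have nHy := subsetP nHG y Gy.
rewrite (sameP cent1P commgP) -morphR //.
apply/eqP/idP => [e|Ng]; last exact: coset_id.
apply: coset_idr => //; exact: groupR.
Qed.

Lemma Zquo (H : {group gT}) : N \subset H -> H \subset Z ->
  #|G / H : 'Z(G / H)| = (p ^ 2)%N.
Proof.
move=> sNH sHZ.
have sHG : H \subset G := subset_trans sHZ (subsetIl _ _).
have cGH : G \subset 'C(H) := subset_trans cGZ (centS sHZ).
have nHG : G \subset 'N(H) := cents_norm cGH.
have nH : H <| G by rewrite /normal sHG nHG.
have [t Gt nCt] := exists_t.
have Ht : {in C, forall c, [~ c, t] \in D}.
  by move=> c Cc; apply: commGG_mem => //; apply: (subsetP sCG).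
have [f fE] := comm_morph Ht cCD.
have efC := imX Gt nCt fE.
have eD : coset H @*^-1 'Z(G / H) = f @*^-1 N.
  apply/setP => x; apply/idP/idP.
    case/morphpreP => nHx /setIP[GHx cGHx].
    have Gx : x \in G.
      by rewrite -(quotientGK nH); apply/morphpreP.
    have xg : {in G, forall g, [~ x, g] \in H}.
      move=> g Gg; rewrite -cosetH_comm //; apply/cent1P.
      by apply: (centP cGHx); apply: mem_quotient.
    have Cx : x \in C.
      apply: (L_cent (H := H)) => // g Gg; by rewrite -invgR groupV xg.
    apply/morphpreP; split => //; rewrite fE //.
    by rewrite inE commGG_mem //= (subsetP sHZ) ?xg.
  case/morphpreP => Cx; rewrite fE // => Nxt.
  have Gx := subsetP sCG x Cx.
  set Kx := (G :&: coset N @*^-1 'C[coset N x])%G.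
  have sCK : C \subset Kx.
    apply/subsetP => c Cc; rewrite memK // (subsetP sCG) //=.
    by apply: (subsetP CN); rewrite derg1 mem_commg.
  have nKC : ~~ (Kx \subset C).
    by apply/subsetPn; exists t => //; rewrite memK // Gt -invgR groupV.
  have sGK := maxC sCK (subsetIl _ _) nKC.
  have gx : {in G, forall g, [~ g, x] \in H}.
    move=> g Gg; have := subsetP sGK g Gg; rewrite memK // => /andP[_].
    exact: (subsetP sNH).
  apply/morphpreP; split; first exact: subsetP nHG x Gx.
  rewrite inE mem_quotient //=; apply/centP => _ /morphimP[g nHg Gg ->].
  apply/cent1P; rewrite cosetH_comm // -invgR groupV.
  by apply: gx.
rewrite -index_cosetpre (quotientGK nH) eD.
have sfC : f @*^-1 D = C.
  by rewrite -efC morphimGK //; apply/subsetP => k /dom_ker.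
have sfN : f @*^-1 N \subset C by apply: subsetIl.
rewrite -(Lagrange_index sCG sfN) indexGC.
have -> : #|C : f @*^-1 N| = p.
  by rewrite -{1}sfC index_morphpre ?efC // cardDN.
by rewrite expnS expn1.
Qed.

Lemma sZZC : Z \subset 'Z(C).
Proof.
apply/subsetP => z /setIP[Gz cGz].
rewrite inE; apply/andP; split.
  by rewrite inE Gz /=; apply: subsetP (centS sDG) z cGz.
exact: subsetP (centS sCG) z cGz.
Qed.

Lemma Zpart : exists2 k : nat, (k == 1%N) || (k == 2%N) &
  #|G / Z| = (p * #|C : 'Z(C)| * p ^ k)%N.
Proof.
have [t Gt nCt] := exists_t.
have sZCC : 'Z(C) \subset C := center_sub C.
have Ht : {in 'Z(C), forall z, [~ z, t] \in D}.
  move=> z Zz; apply: commGG_mem => //; apply: (subsetP sCG); exact: (subsetP sZCC).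
have [f fE] := comm_morph Ht (subset_trans sZCC cCD).
have ker : 'C_('Z(C))[t] = Z.
  apply/eqP; rewrite eqEsubset; apply/andP; split; last first.
    by rewrite subsetI sZZC /= sub_cent1 (subsetP cGZ).
  apply/subsetP => z /setIP[ZCz czt].
  have Gz := subsetP sCG z (subsetP sZCC z ZCz).
  set K := 'C_G[z]%G.
  have sCK : C \subset K.
    apply/subsetP => c Cc; rewrite inE (subsetP sCG) //=; apply/cent1P.
    by apply: commute_sym; apply: (centP (subsetP (subsetIr _ _) z ZCz)).
  have nKC : ~~ (K \subset C).
    apply/subsetPn; exists t => //; rewrite inE Gt; apply/cent1P; apply: commute_sym.
    exact/cent1P.
  have sGK := maxC sCK (subsetIl _ _) nKC.
  by rewrite inE Gz -sub_cent1 (subset_trans sGK) ?subsetIr.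
have sfD : f @* 'Z(C) \subset D.
  by apply/subsetP => _ /morphimP[z _ Zz ->]; rewrite fE // Ht.
have : ~~ (D \subset 'C[t]) by rewrite sub_cent1; apply: contra nCt => cy; rewrite inE Gt.
case/subsetPn => h Dh nht.
have ZCh : h \in 'Z(C).
  have cDC : D \subset 'C(C) by rewrite centsC cCD.
  by rewrite in_setI (subsetP sDC) //= (subsetP cDC).
have fh : f h != 1 by rewrite fE //; apply: contra nht => /commgP/cent1P.
have := cardSg sfD; rewrite cD; case/(dvdn_pfactor _ _ pr_p) => k lek2 ek.
have k0 : k != 0%N.
  apply/negP => /eqP k0; move: ek; rewrite k0 expn0 => /eqP; rewrite -trivg_card1 => /eqP e.
  have := mem_morphim f ZCh ZCh; rewrite e inE => /eqP fh1; by rewrite fh1 eqxx in fh.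
exists k; first by move: lek2 k0; clear ek; case: k => [|[|[|]]].
rewrite card_quotient; last exact: normal_norm (center_normal G).
rewrite -(Lagrange_index sCG (subset_trans sZZC sZCC)) indexGC.
rewrite -(Lagrange_index sZCC sZZC) -ek (card_comm fE) ker.
by rewrite mulnA.
Qed.

Lemma sum_out (F : gT -> nat) k : {in G :\: C, forall x, F x = k} ->
  (\sum_(x in G | x \notin C) F x = (#|G| - #|C|) * k)%N.
Proof.
move=> FE; rewrite (eq_bigl (mem (G :\: C))) => [|x]; last by rewrite !inE andbC.
by rewrite (eq_bigr (fun _ => k)) ?sum_nat_const ?cardsDS ?sCG.
Qed.

Lemma Ssum : (\sum_(x in G) #|G :&: 'C[x]| =
   \sum_(y in C) #|C :&: 'C[y]| + (#|G| - #|C|) * (#|C| %/ p ^ 2)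
   + (#|G| - #|C|) * (p * (#|C| %/ p ^ 2)))%N.
Proof.
have cE : forall y, y \in G :\: C -> #|C :&: 'C[y]| = (#|C| %/ p ^ 2)%N.
  move=> y; rewrite inE => /andP[nCy Gy].
  by rewrite -(cardCCy Gy nCy) mulnK // expn_gt0 prime_gt0.
rewrite (bigID (fun x => x \in C)) /=.
rewrite (sum_out (k := (p * (#|C| %/ p ^ 2))%N)); last first.
  move=> y Hy; rewrite -(cE y Hy); move: Hy; rewrite inE => /andP[nCy Gy].
  exact: cardCGy.
congr (_ + _).
rewrite (eq_bigl (mem C)) => [|x]; last first.
  by rewrite /=; case Cx: (x \in C); rewrite ?andbT ?andbF // (subsetP sCG).
rewrite sum_swap (bigID (fun x => x \in C)) /= (sum_out cE).
congr (_ + _); apply: eq_bigl => x /=.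
by case Cx: (x \in C); rewrite ?andbT ?andbF // (subsetP sCG).
Qed.

Lemma SCab : abelian C -> (\sum_(y in C) #|C :&: 'C[y]| = #|C| * #|C|)%N.
Proof.
move=> abC; rewrite (eq_bigr (fun _ => #|C|)) ?sum_nat_const // => y Cy.
by rewrite (setIidPl _) // sub_cent1 (subsetP abC).
Qed.

Lemma SCnab : (\sum_(y in C) #|C :&: 'C[y]| =
   #|'Z(C)| * #|C| + (#|C| - #|'Z(C)|) * (#|C| %/ p))%N.
Proof.
have sZC : 'Z(C) \subset C := center_sub C.
rewrite (bigID (fun x => x \in 'Z(C))) /=; congr (_ + _).
  rewrite (eq_bigl (mem 'Z(C))) => [|x]; last first.
    by rewrite /=; case Zx: (x \in 'Z(C)); rewrite ?andbT ?andbF // (subsetP sZC).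
  rewrite (eq_bigr (fun _ => #|C|)) ?sum_nat_const // => y Zy.
  by rewrite (setIidPl _) // sub_cent1 (subsetP (subsetIr C 'C(C)) y Zy).
rewrite (eq_bigl (mem (C :\: 'Z(C)))) => [|x]; last by rewrite !inE andbC.
rewrite (eq_bigr (fun _ => #|C| %/ p)%N) ?sum_nat_const ?cardsDS // => y.
move=> /setDP[Cy nZy].
have Hy : {in C, forall c, [~ c, y] \in N}.
  by move=> c Cc; apply: (subsetP CN); rewrite derg1 mem_commg.
have [f fE] := comm_morph Hy (subset_trans sCG cGN).
have sfN : f @* C \subset N.
  by apply/subsetP => _ /morphimP[c _ Cc ->]; rewrite fE // Hy.
have : ~~ (C \subset 'C[y]).
  by rewrite sub_cent1; apply: contra nZy => cy; rewrite inE Cy.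
case/subsetPn => c Cc ncy.
have fc : f c != 1 by rewrite fE //; apply: contra ncy => /commgP/cent1P.
have prN : prime #|N| by rewrite cN.
have efC := prime_sub_eq prN sfN (mem_morphim f Cc Cc) fc.
have := card_comm fE; rewrite efC cN => ip.
by rewrite -(Lagrange (subcent1_sub y C)) -ip mulnK // prime_gt0.
Qed.

Lemma p2_dvd_C : (p ^ 2 %| #|C|)%N.
Proof.
have [t Gt nCt] := exists_t.
by rewrite -(cardCCy Gt nCt) dvdn_mull.
Qed.

Lemma notD_sub_Z : ~~ (D \subset Z).
Proof.
apply: contra NltD => sDZ; by rewrite subsetI subxx.
Qed.


Lemma main_res :
  (abelian 'C_G(G^`(1))%g ->
     comm_degree G = ((2 * p%:R ^+ 2 - 1) / p%:R ^+ 4)%R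
     /\ #|(G / 'Z(G))%g| = (p ^ 3)%N)
  /\
  (~~ abelian 'C_G(G^`(1))%g ->
     exists s : nat,
       [/\ 0 < s,
           (p ^ (2 * s))%N = #|'C_G(G^`(1)) : 'Z('C_G(G^`(1)))|%g,
           comm_degree G =
             (((p%:R - 1) / p%:R ^+ (2 * s - 1) + p%:R ^+ 2 + p%:R - 1)
               / p%:R ^+ 4 : rat)%R
         & #|(G / 'Z(G))%g| = (p ^ (2 * s + 2))%N
           \/ #|(G / 'Z(G))%g| = (p ^ (2 * s + 3))%N])
  /\
  #|(G / (G^`(1) :&: 'Z(G))) : 'Z(G / (G^`(1) :&: 'Z(G)))|%g = (p ^ 2)%N
  /\
  #|(G / 'Z(G)) : 'Z(G / 'Z(G))|%g = (p ^ 2)%N.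
Proof.
have p0 : (0 < p)%N := prime_gt0 pr_p.
have hp1 : ((p - 1)%:R = p%:R - 1 :> rat)%R by rewrite natrB.
have pR0 : (p%:R != 0 :> rat)%R by rewrite pnatr_eq0 -lt0n.
have [k k12 eGZ] := Zpart.
have e_pmm : (p * #|C| - #|C| = (p - 1) * #|C|)%N by rewrite mulnBl mul1n.
set m := #|C| in e_pmm eGZ *.
have em : m = (#|C| %/ p ^ 2 * p ^ 2)%N by rewrite divnK // p2_dvd_C.
set c := (#|C| %/ p ^ 2)%N in em *.
have c0 : (c%:R != 0 :> rat)%R.
  rewrite pnatr_eq0; apply/negP => /eqP c0; move: em; rewrite c0 mul0n /m => e.
  by have := cardG_gt0 C; rewrite e.
split; [|split; [|split]].
- move=> abC.
  have eZC : 'Z(C) = C by apply/center_idP.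
  split.
    rewrite /comm_degree card_comm_pairs Ssum (SCab abC) cardGC -/m e_pmm.
    rewrite em mulnK ?expn_gt0 ?p0 // !natrD !natrM hp1.
    by field; rewrite pR0 c0.
  move: eGZ; rewrite eZC indexgg muln1.
  case/orP: k12 => /eqP -> eGZ; last by rewrite eGZ -expnS.
  have abQ : abelian (G / Z) by apply: card_p2group_abelian pr_p _; rewrite eGZ.
  have := der1_min (normal_norm (center_normal G)) abQ.
  by rewrite (negbTE notD_sub_Z).
- move=> nabC.
  have sC'N := CN.
  have dC' : (#|C^`(1)| %| p)%N by rewrite -cN; apply: cardSg.
  have sC'Z : C^`(1) \subset 'Z(C).
    rewrite subsetI der_sub /= (subset_trans (dergS 1 sCG)) //.
    by rewrite centsC (subset_trans cCD) // centS // dergS // sCG.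
  have [s es] := sq_index pr_p dC' sC'Z.
  have s0 : (0 < s)%N.
    rewrite lt0n; apply: contra nabC => /eqP s0; move: es; rewrite s0 muln0 expn0 => /eqP.
    by rewrite indexg_eq1 => sCZ; apply: subset_trans sCZ (subsetIr _ _).
  exists s; split => //.
  + rewrite /comm_degree card_comm_pairs Ssum SCnab cardGC -/m e_pmm.
    set z := #|'Z(C)|.
    have ezm : (z * p ^ (2 * s) = m)%N by rewrite -es Lagrange // center_sub.
    have zm : (z <= m)%N by rewrite /z /m subset_leq_card // center_sub.
    have ec1 : (m %/ p = c * p)%N by rewrite em expnS expn1 mulnA mulnK.
    set Q := (p ^ (2 * s - 1))%N.
    have eQ : (p ^ (2 * s) = Q * p)%N.
      by rewrite /Q -expnSr subn1 prednK // muln_gt0 s0.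
    have Q0 : (Q%:R != 0 :> rat)%R by rewrite pnatr_eq0 -lt0n expn_gt0 p0.
    have hQ : (p%:R ^+ (2 * s - 1) = Q%:R :> rat)%R by rewrite natrX.
    have ezQ : (z * Q = c * p)%N.
      apply/eqP; rewrite -(eqn_pmul2r p0) -mulnA -eQ ezm em.
      by rewrite -mulnA expnS expn1.
    have hz : (z%:R = c%:R * p%:R / Q%:R :> rat)%R.
      by rewrite -natrM -ezQ natrM mulfK.
    rewrite ec1 !natrD !natrM (natrB _ zm) em mulnK ?expn_gt0 ?p0 //.
    rewrite !natrM hQ hp1 hz.
    by field; rewrite pR0 c0 Q0.
  move: eGZ; rewrite -/m es.
  case/orP: k12 => /eqP -> ->; [left|right]; rewrite -expnS -expnD.
    by rewrite addSn addn1 addn2.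
  by rewrite addSn addn2 addn3.
- apply: Zquo; [exact: subxx | exact: subsetIr].
apply: Zquo; [exact: subsetIr | exact: subxx].
Qed.
End Main.

Close Scope group_scope.
Unset Implicit Arguments.

Theorem theorem3p5 (gT : finGroupType) (G : {group gT}) (p : nat) :
  prime p ->
  coprime (p - 1) #|G| ->
  #|G^`(1)%g| = (p ^ 2)%N ->
  #|(G^`(1) :&: 'Z(G))%g| = p ->
  (abelian 'C_G(G^`(1))%g ->
     comm_degree G = ((2 * p%:R ^+ 2 - 1) / p%:R ^+ 4)%R
     /\ #|(G / 'Z(G))%g| = (p ^ 3)%N)
  /\
  (~~ abelian 'C_G(G^`(1))%g ->
     exists s : nat,
       [/\ 0 < s,
           (p ^ (2 * s))%N = #|'C_G(G^`(1)) : 'Z('C_G(G^`(1)))|%g,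
           comm_degree G =
             (((p%:R - 1) / p%:R ^+ (2 * s - 1) + p%:R ^+ 2 + p%:R - 1)
               / p%:R ^+ 4 : rat)%R
         & #|(G / 'Z(G))%g| = (p ^ (2 * s + 2))%N
           \/ #|(G / 'Z(G))%g| = (p ^ (2 * s + 3))%N])
  /\
  #|(G / (G^`(1) :&: 'Z(G))) : 'Z(G / (G^`(1) :&: 'Z(G)))|%g = (p ^ 2)%N
  /\
  #|(G / 'Z(G)) : 'Z(G / 'Z(G))|%g = (p ^ 2)%N.
Proof.
move=> pr_p cop cD cN.
exact: (main_res pr_p cop cD cN).
Qed.
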